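(* Let $0<\beta<1$, $T>0$, $n_T$ a positive integer, $\tau=T/n_T$ and $t_k=k\tau$. Let $\varrho_j$ be defined by $(1-z)^{-\beta}=\sum_{j=0}^\infty \varrho_j z^j$ and set $P_{j}:=\tau^{\beta}\varrho_{j}$. Then for any real $\mu>0$, $$\mu\sum_{j=0}^{k-1}P_{k-j}\,E_\beta(\mu t_j^{\beta})\le E_\beta(\mu t_k^{\beta})-1,\qquad 1\le k\le n_T,$$ where $E_\beta(z)=\sum_{l=0}^\infty \frac{z^l}{\Gamma(1+l\beta)}$ is the Mittag-Leffler function. *)

(* Defs.v *)
From Stdlib Require Import Reals.
From Coquelicot Require Import Coquelicot.
Open Scope R_scope.

(* Real power x^a for x >= 0 with the convention 0^a = 0 (a > 0 in all uses).
   (Stdlib's Rpower 0 a = 1, which is why we do not use it at 0.) *)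
Definition rpow (x a : R) : R := if Rle_dec x 0 then 0 else Rpower x a.

Definition Gamma (x : R) : R :=
  RInt_gen (fun t => Rpower t (x - 1) * exp (- t)) (at_right 0) (Rbar_locally p_infty).

Definition mittag_leffler (beta z : R) : R :=
  Series (fun l => z ^ l / Gamma (1 + INR l * beta)).

(* Coefficients of (1 - z)^(-beta) = sum_j rho_j z^j, i.e. the generalized
   binomial coefficients rho_j = (-1)^j binom(-beta, j)
   = prod_{i=0}^{j-1} (beta + i) / (i + 1). *)
Fixpoint rho (beta : R) (j : nat) : R :=
  match j with
  | O => 1
  | S i => rho beta i * ((beta + INR i) / INR (S i))
  end.

(* Main.v *)
Require Import Defs.
From Stdlib Require Import Reals Lra Lia ZArith Classical.
From Coquelicot Require Import Coquelicot.
Open Scope R_scope.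

Lemma rpow_pos x a : 0 < x -> rpow x a = Rpower x a.
Proof. intros H; unfold rpow; destruct (Rle_dec x 0); [lra|reflexivity]. Qed.

Lemma rpow_le0 x a : x <= 0 -> rpow x a = 0.
Proof. intros H; unfold rpow; destruct (Rle_dec x 0); [reflexivity|lra]. Qed.

Lemma Rpower_pos x a : 0 < Rpower x a.
Proof. unfold Rpower; apply exp_pos. Qed.

Lemma rpow_nonneg x a : 0 <= rpow x a.
Proof. unfold rpow; destruct (Rle_dec x 0); [lra|left; apply Rpower_pos]. Qed.

Lemma ball_R1 (x e y : R) : ball x e y -> Rabs (y - x) < e.
Proof. exact (fun H => H). Qed.
Lemma ball_R2 (x e y : R) : Rabs (y - x) < e -> ball x e y.
Proof. exact (fun H => H). Qed.

Lemma Rpower_cont_pos a x : 0 < x -> continuous (fun y => Rpower y a) x.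
Proof.
  intros Hx. apply (@ex_derive_continuous R_AbsRing R_NormedModule). unfold Rpower. auto_derive. lra.
Qed.

Lemma Rpower_lt_base a x y : 0 < a -> 0 < x < y -> Rpower x a < Rpower y a.
Proof. intros; apply Rlt_Rpower_l; lra. Qed.

Lemma Rpower_le_base a x y : 0 <= a -> 0 < x <= y -> Rpower x a <= Rpower y a.
Proof. intros; apply Rle_Rpower_l; lra. Qed.

Lemma rpow_cont a x : 0 < a -> continuous (fun y => rpow y a) x.
Proof.
  intros Ha. destruct (Rlt_or_le 0 x) as [Hx|Hx].
  - apply continuous_ext_loc with (fun y => Rpower y a).
    + exists (mkposreal x Hx). intros y Hy. apply ball_R1 in Hy. simpl in Hy.
      rewrite rpow_pos; [reflexivity|]. apply Rabs_lt_between in Hy. lra.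
    + apply Rpower_cont_pos; lra.
  - destruct Hx as [Hx|Hx].
    + apply continuous_ext_loc with (fun _ => 0).
      * exists (mkposreal (-x) ltac:(lra)). intros y Hy. apply ball_R1 in Hy. simpl in Hy.
        rewrite rpow_le0; [reflexivity|]. apply Rabs_lt_between in Hy. lra.
      * apply continuous_const.
    + subst x. unfold continuous. apply filterlim_locally. intros eps.
      rewrite rpow_le0; [|lra].
      assert (Hd : 0 < Rpower eps (/ a)) by apply Rpower_pos.
      exists (mkposreal _ Hd). intros y Hy. apply ball_R1 in Hy. simpl in Hy.
      apply ball_R2. destruct (Rle_dec y 0).
      * rewrite rpow_le0; auto. rewrite Rminus_0_r, Rabs_R0. apply cond_pos.
      * rewrite rpow_pos; [|lra]. rewrite Rminus_0_r, Rabs_pos_eq by (left; apply Rpower_pos).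
        rewrite Rminus_0_r, Rabs_pos_eq in Hy by lra.
        apply Rlt_le_trans with (Rpower (Rpower eps (/ a)) a).
        -- apply Rpower_lt_base; lra.
        -- rewrite Rpower_mult. rewrite Rinv_l by lra. rewrite Rpower_1 by apply cond_pos. lra.
Qed.

Lemma Rpower_minus1 x s : 0 < x -> Rpower x (s - 1) = Rpower x s / x.
Proof.
  intros Hx. unfold Rpower. replace ((s - 1) * ln x) with (s * ln x + - ln x) by ring.
  rewrite exp_plus, exp_Ropp, exp_ln by lra. reflexivity.
Qed.

Lemma exp_le_exp x y : x <= y -> exp x <= exp y.
Proof. intros [H|H]; [left; apply exp_increasing; exact H|subst; lra]. Qed.

Lemma exp_ge1 x : 0 <= x -> 1 <= exp x.
Proof. intros H. rewrite <- exp_0. apply exp_le_exp; lra. Qed.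
Lemma exp_le1 x : x <= 0 -> exp x <= 1.
Proof. intros H. rewrite <- exp_0. apply exp_le_exp; lra. Qed.

Lemma Rpower_1_base a : Rpower 1 a = 1.
Proof. unfold Rpower. rewrite ln_1, Rmult_0_r. apply exp_0. Qed.

Lemma bernoulli s y : 0 <= s <= 1 -> 0 < y -> Rpower y s <= 1 + s * (y - 1).
Proof.
  intros Hs Hy.
  assert (Hd : forall t, 0 < t -> is_derive (fun t => Rpower t s) t (s * Rpower t (s - 1))).
  { intros t Ht. unfold Rpower. auto_derive; [lra|].
    replace ((s - 1) * ln t) with (s * ln t + - ln t) by ring.
    rewrite exp_plus, exp_Ropp, exp_ln by lra. field. lra. }
  destruct (MVT_gen (fun t => Rpower t s) 1 y (fun t => s * Rpower t (s - 1))) as [c [Hc Heq]].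
  - intros x Hx. apply Hd. destruct Hx as [Hx _]. apply Rle_lt_trans with (2 := Hx).
    apply Rmin_glb; lra.
  - intros x Hx. apply continuity_pt_filterlim. apply Rpower_cont_pos.
    destruct Hx as [Hx _]. apply Rlt_le_trans with (2 := Hx). apply Rmin_glb_lt; lra.
  - rewrite Rpower_1_base in Heq.
    assert (Hc0 : 0 < c).
    { destruct Hc as [Hc _]. apply Rlt_le_trans with (2 := Hc). apply Rmin_glb_lt; lra. }
    destruct (Rlt_or_le y 1) as [Hy1|Hy1].
    + rewrite Rmin_right, Rmax_left in Hc by lra.
      assert (H1 : 1 <= Rpower c (s - 1)).
      { unfold Rpower. apply exp_ge1.
        assert (ln c <= 0) by (rewrite <- ln_1; apply ln_le; lra). nra. }
      assert (0 <= s * (1 - y) * (Rpower c (s-1) - 1)) by (apply Rmult_le_pos; [apply Rmult_le_pos|]; lra).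
      nra.
    + rewrite Rmin_left, Rmax_right in Hc by lra.
      assert (H1 : Rpower c (s - 1) <= 1).
      { unfold Rpower. apply exp_le1.
        assert (0 <= ln c) by (rewrite <- ln_1; apply ln_le; lra). nra. }
      assert (0 <= s * (y - 1) * (1 - Rpower c (s-1))) by (apply Rmult_le_pos; [apply Rmult_le_pos|]; lra).
      nra.
Qed.

Lemma tangent_pow s x t : 0 <= s <= 1 -> 0 < x -> 0 < t ->
  Rpower t s <= Rpower x s + s * Rpower x (s - 1) * (t - x).
Proof.
  intros Hs Hx Ht. pose proof (bernoulli s (t / x) Hs ltac:(apply Rdiv_lt_0_compat; lra)) as B.
  unfold Rdiv in B. rewrite <- Rpower_mult_distr in B by (try apply Rinv_0_lt_compat; lra).
  assert (Hi : Rpower (/ x) s = / Rpower x s).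
  { unfold Rpower. rewrite ln_Rinv by lra. rewrite <- exp_Ropp. f_equal. ring. }
  rewrite Hi in B. rewrite Rpower_minus1 by lra.
  pose proof (Rpower_pos x s) as P.
  apply Rmult_le_compat_r with (r := Rpower x s) in B; [|lra].
  replace (Rpower t s * / Rpower x s * Rpower x s) with (Rpower t s) in B by (field; lra).
  eapply Rle_trans; [exact B|]. right. field. lra.
Qed.

Lemma sum_ge_term (f : nat -> R) n : (forall k, 0 <= f k) -> f n <= sum_f_R0 f n.
Proof.
  intros H. destruct n; simpl; [lra|].
  assert (0 <= sum_f_R0 f n).
  { induction n; simpl; [apply H|]. specialize (H (S n)). lra. }
  lra.
Qed.

Lemma exp_ge_pow t n : 0 <= t -> t ^ n / INR (Factorial.fact n) <= exp t.
Proof.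
  intros Ht. eapply Rle_trans; [|apply (exp_ge_taylor t n Ht)].
  apply (sum_ge_term (fun k => t ^ k / INR (Factorial.fact k))).
  intros k. apply Rdiv_le_0_compat; [apply pow_le; lra|apply INR_fact_lt_0].
Qed.

Lemma polyexp_bound x : 0 <= x -> exists C, 0 < C /\ (forall t, 0 < t -> Rpower t x * exp (- t) <= C * exp (- t / 2)).
Proof.
  intros Hx. set (n := Z.to_nat (up x)).
  assert (Hn : x <= INR n).
  { unfold n. destruct (archimed x) as [H1 _]. rewrite INR_IZR_INZ.
    rewrite Z2Nat.id. lra. apply le_IZR. lra. }
  exists (1 + 2 ^ n * INR (Factorial.fact n)). split.
  { pose proof (INR_fact_lt_0 n). pose proof (pow_lt 2 n ltac:(lra)). nra. }
  intros t Ht.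
  assert (Hp : Rpower t x <= 1 + 2 ^ n * INR (Factorial.fact n) * exp (t / 2)).
  { destruct (Rle_or_lt t 1) as [Ht1|Ht1].
    - assert (Rpower t x <= 1).
      { rewrite <- (Rpower_1_base x). apply Rpower_le_base; lra. }
      pose proof (INR_fact_lt_0 n). pose proof (pow_lt 2 n ltac:(lra)).
      pose proof (exp_pos (t/2)). assert (0 < 2 ^ n * INR (Factorial.fact n) * exp (t / 2)).
      { apply Rmult_lt_0_compat; [apply Rmult_lt_0_compat|]; lra. } lra.
    - assert (Rpower t x <= t ^ n).
      { rewrite <- Rpower_pow by lra. apply Rle_Rpower; lra. }
      pose proof (exp_ge_pow (t / 2) n ltac:(lra)) as E.
      pose proof (INR_fact_lt_0 n).
      assert (t ^ n = 2 ^ n * (t / 2) ^ n).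
      { rewrite <- Rpow_mult_distr. f_equal. field. }
      assert ((t / 2) ^ n <= INR (Factorial.fact n) * exp (t / 2)).
      { apply Rmult_le_compat_r with (r := INR (Factorial.fact n)) in E; [|lra].
        replace ((t / 2) ^ n / INR (Factorial.fact n) * INR (Factorial.fact n)) with ((t/2)^n) in E by (field; lra).
        lra. }
      pose proof (pow_lt 2 n ltac:(lra)). nra. }
  assert (exp (- t) = exp (- t / 2) * exp (- t / 2)) by (rewrite <- exp_plus; f_equal; field).
  assert (exp (t / 2) * exp (- t / 2) = 1) by (rewrite <- exp_plus, <- exp_0; f_equal; field).
  pose proof (exp_pos (- t / 2)). pose proof (exp_pos (- t)).
  assert (exp (- t / 2) <= 1) by (rewrite <- exp_0; apply exp_le_exp; lra).
  assert (Rpower t x * exp (- t) <= (1 + 2 ^ n * INR (Factorial.fact n) * exp (t / 2)) * exp (-t))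
    by (apply Rmult_le_compat_r; lra).
  set (E := exp (- t / 2)) in *. set (F := exp (t / 2)) in *. set (K := 2 ^ n * INR (Factorial.fact n)) in *.
  assert ((1 + K * F) * exp (- t) = E * E + K * (F * E) * E) by (rewrite H; ring).
  assert (0 <= K) by (unfold K; pose proof (INR_fact_lt_0 n); pose proof (pow_lt 2 n ltac:(lra)); nra).
  rewrite H0 in H5. assert (E * E <= E) by nra. nra.
Qed.

Definition gf (x t : R) : R := Rpower t (x - 1) * exp (- t).

Lemma gf_pos x t : 0 < gf x t.
Proof. unfold gf. apply Rmult_lt_0_compat; [apply Rpower_pos|apply exp_pos]. Qed.

Lemma gf_cont x t : 0 < t -> continuous (gf x) t.
Proof.
  intros Ht. apply (@ex_derive_continuous R_AbsRing R_NormedModule).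
  unfold gf, Rpower. auto_derive. lra.
Qed.

Lemma cont_pos_exRInt (f : R -> R) e T : 0 < e -> 0 < T ->
  (forall t, 0 < t -> continuous f t) -> ex_RInt f e T.
Proof.
  intros He HT Hc. apply (@ex_RInt_continuous R_CompleteNormedModule). intros z [Hz _]. apply Hc.
  apply Rlt_le_trans with (2 := Hz). apply Rmin_glb_lt; lra.
Qed.

Lemma gf_exRInt x e T : 0 < e -> 0 < T -> ex_RInt (gf x) e T.
Proof. intros; apply cont_pos_exRInt; auto; apply gf_cont. Qed.

Lemma RInt_mono_int x e' e T T' : 0 < e' <= e -> e <= T -> T <= T' ->
  RInt (gf x) e T <= RInt (gf x) e' T'.
Proof.
  intros H1 H2 H3.
  rewrite <- (RInt_Chasles (gf x) e' e T') by (apply gf_exRInt; lra).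
  rewrite <- (RInt_Chasles (gf x) e T T') by (apply gf_exRInt; lra).
  assert (0 <= RInt (gf x) e' e).
  { apply RInt_ge_0; [lra|apply gf_exRInt; lra|intros; left; apply gf_pos]. }
  assert (0 <= RInt (gf x) T T').
  { apply RInt_ge_0; [lra|apply gf_exRInt; lra|intros; left; apply gf_pos]. }
  change plus with Rplus. lra.
Qed.

Lemma RInt_exp_half C e T :
  RInt (fun t => C * exp (- t / 2)) e T = 2 * C * (exp (- e / 2) - exp (- T / 2)).
Proof.
  apply is_RInt_unique.
  assert (H := is_RInt_derive (fun t => - 2 * C * exp (- t / 2)) (fun t => C * exp (- t / 2)) e T).
  replace (2 * C * (exp (- e / 2) - exp (- T / 2))) with
    (minus (- 2 * C * exp (- T / 2)) (- 2 * C * exp (- e / 2))).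
  2: { unfold minus, plus, opp; simpl. ring. }
  apply H.
  - intros t _. auto_derive; auto. replace (exp (- t * / 2)) with (exp (- t / 2)) by (f_equal; field). field.
  - intros t _. apply (@ex_derive_continuous R_AbsRing R_NormedModule). auto_derive. auto.
Qed.

Definition Gset (x : R) (v : R) : Prop := exists e T, 0 < e < T /\ v = RInt (gf x) e T.

Lemma Gset_bound x : 1 <= x -> exists M, forall e T, 0 < e < T -> RInt (gf x) e T <= M.
Proof.
  intros Hx. destruct (polyexp_bound (x - 1) ltac:(lra)) as [C [HC Hb]].
  exists (2 * C). intros e T HeT.
  apply Rle_trans with (RInt (fun t => C * exp (- t / 2)) e T).
  - apply RInt_le; [lra|apply gf_exRInt; lra| |].
    + apply (@ex_RInt_continuous R_CompleteNormedModule). intros z _. apply (@ex_derive_continuous R_AbsRing R_NormedModule).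
      auto_derive. auto.
    + intros t Ht. apply Hb. lra.
  - rewrite RInt_exp_half. pose proof (exp_pos (- e / 2)). pose proof (exp_pos (- T / 2)).
    assert (exp (- e / 2) <= 1) by (apply exp_le1; lra). nra.
Qed.

Lemma Gamma_lub x : 1 <= x -> is_lub (Gset x) (Gamma x).
Proof.
  intros Hx.
  assert (Hb : bound (Gset x)).
  { destruct (Gset_bound x Hx) as [M HM]. exists M. intros v [e [T [HeT ->]]]. auto. }
  assert (Hne : exists v, Gset x v).
  { exists (RInt (gf x) 1 2). exists 1, 2. split; [lra|reflexivity]. }
  destruct (completeness (Gset x) Hb Hne) as [m Hm].
  replace (Gamma x) with m; [exact Hm|].
  symmetry. unfold Gamma. apply is_RInt_gen_unique.
  intros P [eps Heps].
  assert (Hex : exists e0 T0, 0 < e0 < T0 /\ m - eps < RInt (gf x) e0 T0).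
  { destruct (Rlt_or_le (m - eps) m) as [_|]; [|pose proof (cond_pos eps); lra].
    apply NNPP. intros Hn. destruct Hm as [Hm1 Hm2].
    assert (m <= m - eps).
    { apply Hm2. intros v [e [T [HeT ->]]]. apply Rnot_lt_le. intros Hlt.
      apply Hn. exists e, T. auto. }
    pose proof (cond_pos eps). lra. }
  destruct Hex as [e0 [T0 [HeT0 Hlow]]].
  apply Filter_prod with (Q := fun a => 0 < a < e0) (R := fun b => T0 < b).
  - exists (mkposreal e0 ltac:(lra)). intros a Ha Hpos. apply ball_R1 in Ha. simpl in Ha.
    apply Rabs_lt_between in Ha. lra.
  - exists T0. auto.
  - intros a b Ha Hb'. exists (RInt (gf x) a b). split.
    + apply RInt_correct. apply gf_exRInt; lra.
    + apply Heps. apply ball_R2.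
      assert (RInt (gf x) a b <= m).
      { destruct Hm as [Hm1 _]. apply Hm1. exists a, b. split; [lra|reflexivity]. }
      assert (RInt (gf x) e0 T0 <= RInt (gf x) a b) by (apply RInt_mono_int; lra).
      simpl. apply Rabs_lt_between. lra.
Qed.

Definition RI (f : R -> R) (a b : R) : R := RInt f a b.

Lemma RInt_correctR (f : R -> R) a b : ex_RInt f a b -> is_RInt f a b (RInt f a b).
Proof. exact (@RInt_correct R_CompleteNormedModule f a b). Qed.

Lemma RInt_deriv (F dF : R -> R) a b : 0 < a -> 0 < b ->
  (forall t, 0 < t -> is_derive F t (dF t)) -> (forall t, 0 < t -> continuous dF t) ->
  RI dF a b = F b - F a.
Proof.
  intros Ha Hb HD HC. apply is_RInt_unique.
  assert (Hm : forall z, Rmin a b <= z -> 0 < z).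
  { intros z Hz. apply Rlt_le_trans with (2 := Hz). apply Rmin_glb_lt; lra. }
  apply (is_RInt_derive F dF a b).
  - intros z [Hz _]. apply HD, Hm, Hz.
  - intros z [Hz _]. apply HC, Hm, Hz.
Qed.

Lemma RInt_lin2 (f g : R -> R) a b c d : ex_RInt f a b -> ex_RInt g a b ->
  RI (fun t => c * f t + d * g t) a b = c * RI f a b + d * RI g a b.
Proof.
  intros Hf Hg. apply is_RInt_unique.
  apply (is_RInt_plus (fun t => c * f t) (fun t => d * g t) a b (c * RInt f a b) (d * RInt g a b)).
  - apply (is_RInt_scal f a b c (RInt f a b)). apply RInt_correctR; auto.
  - apply (is_RInt_scal g a b d (RInt g a b)). apply RInt_correctR; auto.
Qed.

Lemma Gamma_ge x e T : 1 <= x -> 0 < e < T -> RInt (gf x) e T <= Gamma x.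
Proof. intros Hx HeT. destruct (Gamma_lub x Hx) as [H _]. apply H. exists e, T. auto. Qed.

Lemma Gamma_le_of x M : 1 <= x -> (forall e T, 0 < e < T -> RInt (gf x) e T <= M) -> Gamma x <= M.
Proof. intros Hx H. destruct (Gamma_lub x Hx) as [_ H2]. apply H2. intros v [e [T [HeT ->]]]. auto. Qed.

Lemma Gamma_pos x : 1 <= x -> 0 < Gamma x.
Proof.
  intros Hx. apply Rlt_le_trans with (RInt (gf x) 1 2); [|apply Gamma_ge; lra].
  apply Rlt_le_trans with (RInt (fun _ => exp (-2)) 1 2).
  - rewrite RInt_const. unfold scal; simpl; unfold mult; simpl. pose proof (exp_pos (-2)). lra.
  - apply RInt_le; [lra|apply ex_RInt_const|apply gf_exRInt; lra|].
    intros t Ht. unfold gf. rewrite <- (Rmult_1_l (exp (-2))). apply Rmult_le_compat; try lra.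
    + left; apply exp_pos.
    + unfold Rpower. apply exp_ge1. assert (0 <= ln t) by (rewrite <- ln_1; apply ln_le; lra). nra.
    + apply exp_le_exp. lra.
Qed.

Lemma gf1_eq e T : 0 < e -> 0 < T -> RI (gf 1) e T = exp (- e) - exp (- T).
Proof.
  intros He HT. unfold RI at 1. rewrite (RInt_ext (gf 1) (fun t => exp (- t))).
  - rewrite (RInt_deriv (fun t => - exp (- t))); auto.
    + ring.
    + intros t _. auto_derive; auto. ring.
    + intros t _. apply (@ex_derive_continuous R_AbsRing R_NormedModule). auto_derive. auto.
  - intros z [Hz _]. unfold gf. replace (1 - 1) with 0 by ring. rewrite Rpower_O. apply Rmult_1_l.
    apply Rlt_le_trans with (2 := Rlt_le _ _ Hz). apply Rmin_glb_lt; lra.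
Qed.

Lemma Gamma_1 : Gamma 1 = 1.
Proof.
  apply Rle_antisym.
  - apply Gamma_le_of; [lra|]. intros e T HeT. change (RInt (gf 1) e T) with (RI (gf 1) e T). rewrite gf1_eq by lra.
    pose proof (exp_pos (- T)). assert (exp (- e) <= 1) by (apply exp_le1; lra). lra.
  - apply Rle_plus_epsilon. intros eps Heps.
    set (e := Rmin (eps / 2) (1/2)). set (T := 2 / eps + 1).
    assert (He : 0 < e) by (unfold e; apply Rmin_glb_lt; lra).
    assert (He2 : e <= eps / 2) by apply Rmin_l.
    assert (He3 : e <= 1/2) by apply Rmin_r.
    assert (HT : 1 < T) by (unfold T; assert (0 < 2 / eps) by (apply Rdiv_lt_0_compat; lra); lra).
    pose proof (Gamma_ge 1 e T ltac:(lra) ltac:(lra)) as G. change (RInt (gf 1) e T) with (RI (gf 1) e T) in G. rewrite gf1_eq in G by lra.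
    pose proof (exp_ineq1_le (- e)).
    assert (exp (- T) <= eps / 2).
    { pose proof (exp_ineq1_le T). pose proof (exp_pos T).
      rewrite exp_Ropp. apply Rle_trans with (/ (1 + T)).
      - apply Rinv_le_contravar; lra.
      - unfold T. apply Rle_trans with (/ (2 / eps)).
        + apply Rinv_le_contravar; [apply Rdiv_lt_0_compat; lra|lra].
        + right. field. lra. }
    lra.
Qed.

Lemma Rpower_small_base e x : 0 < e < 1 -> 1 <= x -> Rpower e x <= e.
Proof.
  intros He Hx. unfold Rpower. rewrite <- (exp_ln e) at 2 by lra. apply exp_le_exp.
  assert (ln e < 0) by (rewrite <- ln_1; apply ln_increasing; lra). nra.
Qed.

Lemma gf_byparts x e T : 1 <= x -> 0 < e -> 0 < T ->
  RI (gf (x + 1)) e T = x * RI (gf x) e T + (Rpower e x * exp (- e) - Rpower T x * exp (- T)).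
Proof.
  intros Hx He HT.
  assert (H := RInt_deriv (fun t => - Rpower t x * exp (- t)) (fun t => 1 * gf (x + 1) t + (- x) * gf x t) e T He HT).
  assert (Hd : forall t, 0 < t -> is_derive (fun t => - Rpower t x * exp (- t)) t (1 * gf (x + 1) t + (- x) * gf x t)).
  { intros t Ht. unfold gf, Rpower. auto_derive; [lra|].
    replace (x + 1 - 1) with x by ring.
    replace ((x - 1) * ln t) with (x * ln t + - ln t) by ring.
    rewrite exp_plus, (exp_Ropp (ln t)), exp_ln by lra. field. lra. }
  assert (Hc : forall t, 0 < t -> continuous (fun t => 1 * gf (x + 1) t + (- x) * gf x t) t).
  { intros t Ht. apply (@ex_derive_continuous R_AbsRing R_NormedModule). unfold gf, Rpower. auto_derive. lra. }
  specialize (H Hd Hc).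
  rewrite RInt_lin2 in H by (apply gf_exRInt; lra).
  lra.
Qed.

Lemma RI_le_Gamma x e T : 1 <= x -> 0 < e < T -> RI (gf x) e T <= Gamma x.
Proof. apply Gamma_ge. Qed.

Lemma Gamma_rec x : 1 <= x -> Gamma (x + 1) = x * Gamma x.
Proof.
  intros Hx. apply Rle_antisym.
  - apply Gamma_le_of; [lra|]. intros e T HeT. apply Rle_plus_epsilon. intros eta Heta.
    set (e' := Rmin e (Rmin eta (1/2))).
    assert (H1 : e' <= e) by apply Rmin_l.
    assert (H2 : e' <= eta) by (eapply Rle_trans; [apply Rmin_r|apply Rmin_l]).
    assert (H3 : e' <= 1/2) by (eapply Rle_trans; [apply Rmin_r|apply Rmin_r]).
    assert (H4 : 0 < e') by (unfold e'; repeat apply Rmin_glb_lt; lra).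
    apply Rle_trans with (RI (gf (x + 1)) e' T); [apply RInt_mono_int; lra|].
    rewrite gf_byparts by lra.
    pose proof (RI_le_Gamma x e' T Hx ltac:(lra)).
    pose proof (Rpower_small_base e' x ltac:(lra) Hx).
    assert (exp (- e') <= 1) by (apply exp_le1; lra).
    pose proof (Rpower_pos e' x). pose proof (Rpower_pos T x). pose proof (exp_pos (- T)).
    assert (0 <= Rpower T x * exp (- T)) by (apply Rmult_le_pos; lra).
    assert (Rpower e' x * exp (- e') <= Rpower e' x) by (rewrite <- (Rmult_1_r (Rpower e' x)) at 2; apply Rmult_le_compat_l; lra).
    nra.
  - assert (Gamma x <= Gamma (x + 1) / x); [|apply Rmult_le_compat_l with (r := x) in H; [|lra];
      replace (x * (Gamma (x + 1) / x)) with (Gamma (x + 1)) in H by (field; lra); exact H].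
    apply Gamma_le_of; [lra|]. intros e T HeT. apply Rle_plus_epsilon. intros eta Heta.
    destruct (polyexp_bound x ltac:(lra)) as [C [HC Hb]].
    set (T' := Rmax (T + 1) (2 * C / (x * eta))).
    assert (HT1 : T + 1 <= T') by apply Rmax_l.
    assert (HT2 : 2 * C / (x * eta) <= T') by apply Rmax_r.
    assert (Hxe : 0 < x * eta) by (apply Rmult_lt_0_compat; lra).
    apply Rle_trans with (RI (gf x) e T'); [apply RInt_mono_int; lra|].
    pose proof (gf_byparts x e T' Hx ltac:(lra) ltac:(lra)) as BP.
    pose proof (RI_le_Gamma (x + 1) e T' ltac:(lra) ltac:(lra)).
    pose proof (Hb T' ltac:(lra)) as HbT.
    assert (exp (- T' / 2) <= 2 / T').
    { pose proof (exp_ineq1_le (T' / 2)). pose proof (exp_pos (T'/2)).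
      replace (- T' / 2) with (- (T' / 2)) by field. rewrite exp_Ropp.
      apply Rle_trans with (/ (1 + T' / 2)); [apply Rinv_le_contravar; lra|].
      apply Rle_trans with (/ (T' / 2)); [apply Rinv_le_contravar; lra|]. right; field. lra. }
    assert (C * (2 / T') <= x * eta).
    { assert (2 * C <= x * eta * T').
      { apply Rmult_le_compat_l with (r := x * eta) in HT2; [|lra].
        replace (x * eta * (2 * C / (x * eta))) with (2 * C) in HT2 by (field; lra). lra. }
      replace (C * (2 / T')) with (2 * C / T') by (field; lra).
      apply Rmult_le_reg_r with T'; [lra|]. replace (2 * C / T' * T') with (2 * C) by (field; lra). lra. }
    assert (C * exp (- T' / 2) <= C * (2 / T')) by (apply Rmult_le_compat_l; lra).
    pose proof (Rpower_pos e x). pose proof (exp_pos (- e)).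
    assert (0 <= Rpower e x * exp (- e)) by (apply Rmult_le_pos; lra).
    assert (x * RI (gf x) e T' <= Gamma (x + 1) + x * eta) by lra.
    apply Rmult_le_reg_l with x; [lra|].
    replace (x * (Gamma (x + 1) / x + eta)) with (Gamma (x + 1) + x * eta) by (field; lra).
    lra.
Qed.

Lemma gf_shift x s t : 0 < t -> gf (x + s) t = Rpower t s * gf x t.
Proof.
  intros Ht. unfold gf. replace (x + s - 1) with (s + (x - 1)) by ring.
  rewrite Rpower_plus. ring.
Qed.

Lemma gf_succ x t : 0 < t -> gf (x + 1) t = t * gf x t.
Proof. intros Ht. rewrite gf_shift by lra. rewrite Rpower_1 by lra. reflexivity. Qed.

Lemma gf_exRInt' x e T : 0 < e -> 0 < T -> ex_RInt (gf x) e T.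
Proof. apply gf_exRInt. Qed.

Lemma RI_le (f g : R -> R) a b : a <= b -> ex_RInt f a b -> ex_RInt g a b ->
  (forall x, a < x < b -> f x <= g x) -> RI f a b <= RI g a b.
Proof. apply RInt_le. Qed.

Lemma ex_RInt_lin2 (f g : R -> R) a b c d : ex_RInt f a b -> ex_RInt g a b ->
  ex_RInt (fun t => c * f t + d * g t) a b.
Proof.
  intros Hf Hg. exists (c * RI f a b + d * RI g a b).
  apply (is_RInt_plus (fun t => c * f t) (fun t => d * g t) a b (c * RI f a b) (d * RI g a b)).
  - apply (is_RInt_scal f a b c (RI f a b)). apply RInt_correctR; auto.
  - apply (is_RInt_scal g a b d (RI g a b)). apply RInt_correctR; auto.
Qed.

Lemma Wendel_up x s : 1 <= x -> 0 <= s <= 1 -> Gamma (x + s) <= Rpower x s * Gamma x.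
Proof.
  intros Hx Hs. apply Gamma_le_of; [lra|]. intros e T HeT.
  change (RInt (gf (x + s)) e T) with (RI (gf (x + s)) e T).
  set (c1 := (1 - s) * Rpower x s). set (c2 := s * Rpower x (s - 1)).
  apply Rle_trans with (RI (fun t => c1 * gf x t + c2 * gf (x + 1) t) e T).
  - apply RI_le; [lra|apply gf_exRInt; lra| |].
    + apply ex_RInt_lin2; apply gf_exRInt; lra.
    + intros t Ht. rewrite gf_shift, gf_succ by lra.
      pose proof (tangent_pow s x t Hs ltac:(lra) ltac:(lra)) as TP.
      pose proof (gf_pos x t).
      apply Rmult_le_compat_r with (r := gf x t) in TP; [|lra].
      eapply Rle_trans; [exact TP|]. right. unfold c1, c2.
      rewrite (Rpower_minus1 x s) by lra. field. lra.
  - rewrite RInt_lin2 by (apply gf_exRInt; lra).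
    pose proof (RI_le_Gamma x e T Hx HeT). pose proof (RI_le_Gamma (x + 1) e T ltac:(lra) HeT).
    rewrite Gamma_rec in H0 by lra.
    assert (0 <= c1) by (unfold c1; pose proof (Rpower_pos x s); nra).
    assert (0 <= c2) by (unfold c2; pose proof (Rpower_pos x (s - 1)); nra).
    apply Rle_trans with (c1 * Gamma x + c2 * (x * Gamma x)).
    + apply Rplus_le_compat; apply Rmult_le_compat_l; lra.
    + right. unfold c1, c2. rewrite (Rpower_minus1 x s) by lra. field. lra.
Qed.

Lemma Wendel_low x s : 1 <= x -> 0 <= s <= 1 -> x * Gamma x <= Rpower (x + s) (1 - s) * Gamma (x + s).
Proof.
  intros Hx Hs. rewrite <- Gamma_rec by lra. set (y := x + s).
  apply Gamma_le_of; [lra|]. intros e T HeT.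
  change (RInt (gf (x + 1)) e T) with (RI (gf (x + 1)) e T).
  set (c1 := s * Rpower y (1 - s)). set (c2 := (1 - s) * Rpower y (1 - s - 1)).
  apply Rle_trans with (RI (fun t => c1 * gf y t + c2 * gf (y + 1) t) e T).
  - apply RI_le; [lra|apply gf_exRInt; lra| |].
    + apply ex_RInt_lin2; apply gf_exRInt; lra.
    + intros t Ht. replace (x + 1) with (y + (1 - s)) by (unfold y; ring).
      rewrite gf_shift, gf_succ by lra.
      pose proof (tangent_pow (1 - s) y t ltac:(lra) ltac:(unfold y; lra) ltac:(lra)) as TP.
      pose proof (gf_pos y t).
      apply Rmult_le_compat_r with (r := gf y t) in TP; [|lra].
      eapply Rle_trans; [exact TP|]. right. unfold c1, c2.
      rewrite (Rpower_minus1 y (1 - s)) by (unfold y; lra). field. unfold y; lra.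
  - rewrite RInt_lin2 by (apply gf_exRInt; lra).
    assert (Hy : 1 <= y) by (unfold y; lra).
    pose proof (RI_le_Gamma y e T Hy HeT). pose proof (RI_le_Gamma (y + 1) e T ltac:(lra) HeT).
    rewrite Gamma_rec in H0 by lra.
    assert (0 <= c1) by (unfold c1; pose proof (Rpower_pos y (1 - s)); nra).
    assert (0 <= c2) by (unfold c2; pose proof (Rpower_pos y (1 - s - 1)); nra).
    apply Rle_trans with (c1 * Gamma y + c2 * (y * Gamma y)).
    + apply Rplus_le_compat; apply Rmult_le_compat_l; lra.
    + right. unfold c1, c2. rewrite (Rpower_minus1 y (1 - s)) by lra. field. lra.
Qed.

Lemma Gamma_nat n : Gamma (INR (S n)) = INR (fact n).
Proof.
  induction n.
  - simpl. rewrite Gamma_1. reflexivity.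
  - rewrite S_INR. rewrite Gamma_rec by (apply (le_INR 1); lia).
    rewrite IHn. rewrite fact_simpl, mult_INR, S_INR. ring.
Qed.

Fixpoint pr (y : R) (n : nat) : R :=
  match n with O => 1 | S k => pr y k * (y + INR k) end.

Lemma Gamma_pr y n : 1 <= y -> Gamma (y + INR n) = Gamma y * pr y n.
Proof.
  intros Hy. induction n.
  - simpl. rewrite Rplus_0_r. ring.
  - rewrite S_INR. replace (y + (INR n + 1)) with ((y + INR n) + 1) by ring.
    rewrite Gamma_rec by (pose proof (pos_INR n); lra). rewrite IHn. simpl. ring.
Qed.

Lemma Gamma_ratio y b l : 1 <= y -> 0 < b < 1 ->
  forall i, (i <= l)%nat -> Gamma (y + INR i * b) <= Rpower (y + INR l * b) (INR i * b) * Gamma y.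
Proof.
  intros Hy Hb. assert (Hl : 0 <= INR l * b) by (pose proof (pos_INR l); nra).
  induction i; intros Hi.
  - simpl. rewrite Rmult_0_l, Rplus_0_r, Rpower_O by lra. lra.
  - rewrite S_INR. replace (y + (INR i + 1) * b) with ((y + INR i * b) + b) by ring.
    assert (Hi0 : 0 <= INR i * b) by (pose proof (pos_INR i); nra).
    eapply Rle_trans; [apply Wendel_up; lra|].
    assert (Hil : INR i <= INR l) by (apply le_INR; lia).
    assert (Rpower (y + INR i * b) b <= Rpower (y + INR l * b) b) by (apply Rpower_le_base; nra).
    specialize (IHi ltac:(lia)).
    pose proof (Rpower_pos (y + INR i * b) b).
    apply Rle_trans with (Rpower (y + INR l * b) b * (Rpower (y + INR l * b) (INR i * b) * Gamma y)).
    + apply Rmult_le_compat; try lra. pose proof (Gamma_pos (y + INR i * b) ltac:(lra)); lra.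
    + right. rewrite <- Rmult_assoc, <- Rpower_plus. f_equal. f_equal. ring.
Qed.

Lemma rho_nonneg b j : 0 < b -> 0 <= rho b j.
Proof.
  intros Hb. induction j; [simpl; lra|]. change (rho b (S j)) with (rho b j * ((b + INR j) / INR (S j))).
  apply Rmult_le_pos; auto.
  apply Rdiv_le_0_compat; [pose proof (pos_INR j); lra|]. apply lt_0_INR; lia.
Qed.

Lemma rho_gamma b n : 0 < b < 1 ->
  rho b (S n) * Gamma (1 + b) = b * Gamma (b + INR (S n)) / INR (fact (S n)).
Proof.
  intros Hb. induction n.
  - simpl. replace (b + 1) with (1 + b) by ring. field.
  - change (rho b (S (S n))) with (rho b (S n) * ((b + INR (S n)) / INR (S (S n)))).
    replace (rho b (S n) * ((b + INR (S n)) / INR (S (S n))) * Gamma (1 + b))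
      with (rho b (S n) * Gamma (1 + b) * ((b + INR (S n)) / INR (S (S n)))) by ring.
    rewrite IHn. rewrite (S_INR (S n)) at 2. replace (b + (INR (S n) + 1)) with ((b + INR (S n)) + 1) by ring.
    rewrite Gamma_rec by (rewrite S_INR; pose proof (pos_INR n); lra).
    rewrite (fact_simpl (S n)), mult_INR.
    pose proof (INR_fact_lt_0 (S n)). assert (0 < INR (S (S n))) by (apply lt_0_INR; lia).
    field. lra.
Qed.

Lemma rho_bound b m : 0 < b < 1 -> (1 <= m)%nat ->
  rho b m <= (rpow (INR m) b - rpow (INR (m - 1)) b) / Gamma (1 + b).
Proof.
  intros Hb Hm. destruct m as [|n]; [lia|].
  assert (HG : 0 < Gamma (1 + b)) by (apply Gamma_pos; lra).
  apply Rmult_le_reg_r with (Gamma (1 + b)); [exact HG|].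
  replace ((rpow (INR (S n)) b - rpow (INR (S n - 1)) b) / Gamma (1 + b) * Gamma (1 + b))
    with (rpow (INR (S n)) b - rpow (INR (S n - 1)) b) by (field; lra).
  rewrite rho_gamma by lra.
  set (m := INR (S n)).
  assert (Hm1 : 1 <= m) by (unfold m; rewrite S_INR; pose proof (pos_INR n); lra).
  assert (HW : Gamma (m + b) <= Rpower m b * INR (fact n)).
  { unfold m. rewrite <- Gamma_nat. apply Wendel_up; [exact Hm1|lra]. }
  assert (Hf : INR (fact (S n)) = m * INR (fact n)) by (unfold m; rewrite fact_simpl, mult_INR; reflexivity).
  pose proof (INR_fact_lt_0 n).
  assert (Hstep : b * Gamma (b + m) / INR (fact (S n)) <= b * Rpower m b / m).
  { rewrite Hf. replace (b + m) with (m + b) by ring.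
    apply Rmult_le_reg_r with (m * INR (fact n)); [nra|].
    replace (b * Gamma (m + b) / (m * INR (fact n)) * (m * INR (fact n))) with (b * Gamma (m + b)) by (field; lra).
    replace (b * Rpower m b / m * (m * INR (fact n))) with (b * (Rpower m b * INR (fact n))) by (field; lra).
    apply Rmult_le_compat_l; lra. }
  eapply Rle_trans; [exact Hstep|].
  rewrite (rpow_pos m) by lra.
  replace (S n - 1)%nat with n by lia.
  destruct n as [|n'].
  - simpl in m. unfold m. rewrite rpow_le0 by (simpl; lra). rewrite Rpower_1_base. lra.
  - assert (Hn : 0 < INR (S n')) by (apply lt_0_INR; lia).
    assert (Hm' : m = INR (S n') + 1) by (unfold m; rewrite (S_INR (S n')); reflexivity).
    rewrite rpow_pos by lra.
    set (y := INR (S n') / m).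
    assert (Hy : 0 < y) by (unfold y; apply Rdiv_lt_0_compat; lra).
    pose proof (bernoulli b y ltac:(lra) Hy) as B.
    assert (INR (S n') = y * m) by (unfold y; field; lra).
    rewrite H0. rewrite <- Rpower_mult_distr by lra.
    pose proof (Rpower_pos m b).
    apply Rmult_le_compat_r with (r := Rpower m b) in B; [|lra].
    assert (y - 1 = - / m) by (unfold y; rewrite Hm'; field; lra).
    rewrite H2 in B.
    apply Rle_trans with (Rpower m b - (1 + b * - / m) * Rpower m b).
    + right. field. lra.
    + lra.
Qed.

Lemma cR_minus (f g : R -> R) x : continuous f x -> continuous g x -> continuous (fun y => f y - g y) x.
Proof. intros Hf Hg. exact (@continuous_minus R_UniformSpace R_AbsRing R_NormedModule f g x Hf Hg). Qed.
Lemma cR_plus (f g : R -> R) x : continuous f x -> continuous g x -> continuous (fun y => f y + g y) x.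
Proof. intros Hf Hg. exact (@continuous_plus R_UniformSpace R_AbsRing R_NormedModule f g x Hf Hg). Qed.
Lemma cR_mult (f g : R -> R) x : continuous f x -> continuous g x -> continuous (fun y => f y * g y) x.
Proof. intros Hf Hg. exact (@continuous_mult R_UniformSpace R_AbsRing f g x Hf Hg). Qed.
Lemma cR_comp (f g : R -> R) x : continuous f x -> continuous g (f x) -> continuous (fun y => g (f y)) x.
Proof. intros Hf Hg. exact (@continuous_comp R_UniformSpace R_UniformSpace R_UniformSpace f g x Hf Hg). Qed.
Lemma cR_const (c x : R) : continuous (fun _ : R => c) x.
Proof. exact (@continuous_const R_UniformSpace R_UniformSpace c x). Qed.
Lemma cR_exp x : continuous exp x.
Proof. apply (@ex_derive_continuous R_AbsRing R_NormedModule). auto_derive. auto. Qed.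

Definition gJ (a c v : R) : R := rpow (1 - rpow v (/ a)) c.
Definition J (a c : R) : R := RI (gJ a c) 0 1.

Lemma gJ_cont a c v : 0 < a -> 0 < c -> continuous (gJ a c) v.
Proof.
  intros Ha Hc. unfold gJ.
  apply (cR_comp (fun v => 1 - rpow v (/ a)) (fun w => rpow w c)).
  - apply cR_minus; [apply cR_const|apply rpow_cont; apply Rinv_0_lt_compat; lra].
  - apply rpow_cont; lra.
Qed.

Lemma gJ_exRInt a c x y : 0 < a -> 0 < c -> ex_RInt (gJ a c) x y.
Proof. intros. apply (@ex_RInt_continuous R_CompleteNormedModule). intros; apply gJ_cont; auto. Qed.

Lemma rpow_le1 v p : 0 < p -> v <= 1 -> rpow v p <= 1.
Proof.
  intros Hp Hv. unfold rpow. destruct (Rle_dec v 0); [lra|].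
  rewrite <- (Rpower_1_base p). apply Rpower_le_base; lra.
Qed.

Lemma gJ_bounds a c v : 0 < a -> 0 < c -> 0 <= v <= 1 -> 0 <= gJ a c v <= 1.
Proof.
  intros Ha Hc Hv. unfold gJ. split; [apply rpow_nonneg|].
  apply rpow_le1; [lra|]. pose proof (rpow_nonneg v (/ a)). lra.
Qed.

Lemma Rpower_lt1 v p : 0 < p -> 0 < v < 1 -> Rpower v p < 1.
Proof.
  intros Hp Hv. unfold Rpower. rewrite <- exp_0. apply exp_increasing.
  assert (ln v < 0) by (rewrite <- ln_1; apply ln_increasing; lra). nra.
Qed.

Lemma Rpower_succ w c : 0 < w -> Rpower w (c + 1) = Rpower w c * w.
Proof. intros Hw. rewrite Rpower_plus, Rpower_1 by lra. reflexivity. Qed.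

Lemma F_deriv a c v : 0 < a -> 0 < c -> 0 < v < 1 ->
  is_derive (fun v => v * Rpower (1 - Rpower v (/ a)) (c + 1)) v
    ((1 + (c + 1) / a) * Rpower (1 - Rpower v (/ a)) (c + 1) - ((c + 1) / a) * Rpower (1 - Rpower v (/ a)) c).
Proof.
  intros Ha Hc Hv.
  assert (Hu : Rpower v (/ a) < 1) by (apply Rpower_lt1; [apply Rinv_0_lt_compat|]; lra).
  pose proof (Rpower_pos v (/ a)) as Hu0.
  unfold Rpower. unfold Rpower in Hu, Hu0. auto_derive; [repeat split; lra|].
  set (u := exp (/ a * ln v)) in *.
  replace (1 + - u) with (1 - u) by ring.
  replace ((c + 1) * ln (1 - u)) with (c * ln (1 - u) + ln (1 - u)) by ring.
  rewrite exp_plus, exp_ln by lra.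
  set (E := exp (c * ln (1 - u))). field. lra.
Qed.

Lemma RI_const c a b : RI (fun _ => c) a b = (b - a) * c.
Proof. unfold RI. rewrite RInt_const. reflexivity. Qed.

Lemma RI_chasles (f : R -> R) a b c : ex_RInt f a b -> ex_RInt f b c -> RI f a b + RI f b c = RI f a c.
Proof. intros H1 H2. unfold RI. rewrite <- (RInt_Chasles f a b c H1 H2). reflexivity. Qed.

Lemma RI_abs_le (f : R -> R) a b M : a <= b -> ex_RInt f a b ->
  (forall t, a <= t <= b -> Rabs (f t) <= M) -> Rabs (RI f a b) <= (b - a) * M.
Proof.
  intros Hab Hf HM. apply Rabs_le. split.
  - apply Rle_trans with (RI (fun _ => - M) a b).
    + rewrite RI_const. lra.
    + apply RI_le; auto; [apply ex_RInt_const|]. intros t Ht.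
      specialize (HM t ltac:(lra)). apply Rabs_le_between in HM. lra.
  - apply Rle_trans with (RI (fun _ => M) a b).
    + apply RI_le; auto; [apply ex_RInt_const|]. intros t Ht.
      specialize (HM t ltac:(lra)). apply Rabs_le_between in HM. lra.
    + rewrite RI_const. lra.
Qed.

Lemma RInt_deriv_in (F dF : R -> R) a b : a <= b ->
  (forall t, a <= t <= b -> is_derive F t (dF t)) -> (forall t, a <= t <= b -> continuous dF t) ->
  RI dF a b = F b - F a.
Proof.
  intros Hab HD HC. apply is_RInt_unique.
  apply (is_RInt_derive F dF a b).
  - intros z Hz. rewrite Rmin_left, Rmax_right in Hz by lra. apply HD, Hz.
  - intros z Hz. rewrite Rmin_left, Rmax_right in Hz by lra. apply HC, Hz.
Qed.

Lemma zero_of_small X : (forall eta, 0 < eta -> Rabs X <= eta) -> X = 0.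
Proof.
  intros H. destruct (Req_dec X 0) as [|Hn]; auto.
  pose proof (Rabs_pos_lt X Hn). specialize (H (Rabs X / 2) ltac:(lra)). lra.
Qed.

Lemma J_rec a c : 0 < a -> 0 < c -> (a + c + 1) * J a (c + 1) = (c + 1) * J a c.
Proof.
  intros Ha Hc.
  set (k1 := 1 + (c + 1) / a). set (k2 := - ((c + 1) / a)).
  assert (Hca : 0 < (c + 1) / a) by (apply Rdiv_lt_0_compat; lra).
  set (H := fun v => k1 * gJ a (c + 1) v + k2 * gJ a c v).
  assert (HX : RI H 0 1 = k1 * J a (c + 1) + k2 * J a c).
  { unfold H, J. apply RInt_lin2; apply gJ_exRInt; lra. }
  assert (HexH : forall x y, ex_RInt H x y) by (intros; unfold H; apply ex_RInt_lin2; apply gJ_exRInt; lra).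
  assert (HcH : forall t, continuous H t).
  { intros t. unfold H. apply cR_plus; apply cR_mult; try apply cR_const; apply gJ_cont; lra. }
  set (M := k1 + (c + 1) / a).
  assert (HM : forall t, 0 <= t <= 1 -> Rabs (H t) <= M).
  { intros t Ht. unfold H, M, k2. pose proof (gJ_bounds a (c + 1) t Ha ltac:(lra) Ht).
    pose proof (gJ_bounds a c t Ha Hc Ht). unfold k1 in *. apply Rabs_le. split; nra. }
  assert (HM0 : 0 < M) by (unfold M, k1; lra).
  set (F := fun v => v * Rpower (1 - Rpower v (/ a)) (c + 1)).
  assert (X0 : RI H 0 1 = 0).
  { apply zero_of_small. intros eta Heta.
    assert (Hia : 0 < / a) by (apply Rinv_0_lt_compat; lra).
    pose proof (rpow_cont (/ a) 1 Hia) as Hc1.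
    destruct (proj1 (filterlim_locally _ _) Hc1 (mkposreal (eta / 2) ltac:(lra))) as [d1 Hd1].
    set (d := Rmin (1/4) (Rmin (d1 / 2) (eta / (4 * M + 4)))).
    assert (Hd0 : 0 < d) by (unfold d; repeat apply Rmin_glb_lt; try apply Rdiv_lt_0_compat; try lra; apply cond_pos).
    assert (Hd14 : d <= 1/4) by apply Rmin_l.
    assert (Hdd1 : d <= d1 / 2) by (eapply Rle_trans; [apply Rmin_r|apply Rmin_l]).
    assert (Hde : d <= eta / (4 * M + 4)) by (eapply Rle_trans; [apply Rmin_r|apply Rmin_r]).
    assert (Hmid : RI H d (1 - d) = F (1 - d) - F d).
    { apply RInt_deriv_in; [lra| |intros; apply HcH].
      intros t Ht.
      assert (Htv : 0 < t < 1) by lra.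
      assert (Hu : Rpower t (/ a) < 1) by (apply Rpower_lt1; lra).
      replace (H t) with ((1 + (c + 1) / a) * Rpower (1 - Rpower t (/ a)) (c + 1) - ((c + 1) / a) * Rpower (1 - Rpower t (/ a)) c).
      + apply F_deriv; lra.
      + unfold H, gJ, k1, k2. rewrite (rpow_pos t) by lra. rewrite !(rpow_pos (1 - Rpower t (/ a))) by lra. ring. }
    assert (Hleft : Rabs (RI H 0 d) <= (d - 0) * M) by (apply RI_abs_le; auto; [lra|]; intros; apply HM; lra).
    assert (Hright : Rabs (RI H (1 - d) 1) <= (1 - (1 - d)) * M) by (apply RI_abs_le; auto; [lra|]; intros; apply HM; lra).
    assert (HFd : 0 <= F d <= d).
    { unfold F. assert (Hu : Rpower d (/ a) < 1) by (apply Rpower_lt1; lra).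
      pose proof (Rpower_pos d (/ a)). set (w := 1 - Rpower d (/ a)).
      rewrite Rpower_succ by (unfold w; lra).
      assert (Rpower w c <= 1) by (rewrite <- (Rpower_1_base c); apply Rpower_le_base; unfold w; lra).
      pose proof (Rpower_pos w c). assert (0 < w < 1) by (unfold w; lra).
      assert (0 <= Rpower w c * w <= 1) by (split; nra). split; nra. }
    assert (HF1 : 0 <= F (1 - d) <= eta / 2).
    { unfold F. assert (Hu : Rpower (1 - d) (/ a) < 1) by (apply Rpower_lt1; lra).
      pose proof (Rpower_pos (1 - d) (/ a)). set (w := 1 - Rpower (1 - d) (/ a)).
      assert (Hw : w < eta / 2).
      { specialize (Hd1 (1 - d)). assert (ball 1 d1 (1 - d)) as Hb.
        { apply ball_R2. rewrite Rabs_left by lra. lra. }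
        specialize (Hd1 Hb). apply ball_R1 in Hd1. simpl in Hd1.
        rewrite (rpow_pos (1 - d)), (rpow_pos 1), Rpower_1_base in Hd1 by lra.
        rewrite Rabs_left in Hd1 by lra. unfold w. lra. }
      rewrite Rpower_succ by (unfold w; lra).
      assert (Rpower w c <= 1) by (rewrite <- (Rpower_1_base c); apply Rpower_le_base; unfold w; lra).
      pose proof (Rpower_pos w c). assert (0 < w < 1) by (unfold w; lra).
      assert (0 <= Rpower w c * w <= w) by (split; nra). split; nra. }
    rewrite <- (RI_chasles H 0 d 1) by auto. rewrite <- (RI_chasles H d (1 - d) 1) by auto.
    rewrite Hmid.
    assert (2 * d * M + d <= eta / 2).
    { apply Rle_trans with ((2 * M + 1) * (eta / (4 * M + 4))); [nra|].
      apply Rmult_le_reg_r with (4 * M + 4); [lra|].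
      replace ((2 * M + 1) * (eta / (4 * M + 4)) * (4 * M + 4)) with ((2 * M + 1) * eta) by (field; lra).
      nra. }
    apply Rabs_le. apply Rabs_le_between in Hleft. apply Rabs_le_between in Hright. split; lra. }
  rewrite HX in X0. unfold k1, k2 in X0.
  apply Rmult_eq_reg_r with (/ a); [|apply Rinv_neq_0_compat; lra].
  replace ((a + c + 1) * J a (c + 1) * / a) with ((1 + (c + 1) / a) * J a (c + 1)) by (field; lra).
  replace ((c + 1) * J a c * / a) with ((c + 1) / a * J a c) by (field; lra).
  lra.
Qed.

Lemma RI_ext (f g : R -> R) a b : a <= b -> (forall x, a < x < b -> f x = g x) -> RI f a b = RI g a b.
Proof.
  intros Hab H. unfold RI. apply RInt_ext. intros x Hx.
  rewrite Rmin_left, Rmax_right in Hx by lra. apply H, Hx.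
Qed.



Lemma RI_scal (f : R -> R) k a b : ex_RInt f a b -> RI (fun t => k * f t) a b = k * RI f a b.
Proof.
  intros H. apply is_RInt_unique. apply (is_RInt_scal f a b k (RI f a b)). apply RInt_correctR; auto.
Qed.

Lemma ex_RInt_scalR (f : R -> R) k a b : ex_RInt f a b -> ex_RInt (fun t => k * f t) a b.
Proof. intros H. exists (k * RI f a b). apply (is_RInt_scal f a b k (RI f a b)). apply RInt_correctR; auto. Qed.

Lemma gf_byparts0 x e T : 0 < e -> 0 < T ->
  RI (gf (x + 1)) e T = x * RI (gf x) e T + (Rpower e x * exp (- e) - Rpower T x * exp (- T)).
Proof.
  intros He HT.
  assert (H := RInt_deriv (fun t => - Rpower t x * exp (- t)) (fun t => 1 * gf (x + 1) t + (- x) * gf x t) e T He HT).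
  assert (Hd : forall t, 0 < t -> is_derive (fun t => - Rpower t x * exp (- t)) t (1 * gf (x + 1) t + (- x) * gf x t)).
  { intros t Ht. unfold gf, Rpower. auto_derive; [lra|].
    replace (x + 1 - 1) with x by ring.
    replace ((x - 1) * ln t) with (x * ln t + - ln t) by ring.
    rewrite exp_plus, (exp_Ropp (ln t)), exp_ln by lra. field. lra. }
  assert (Hc : forall t, 0 < t -> continuous (fun t => 1 * gf (x + 1) t + (- x) * gf x t) t).
  { intros t Ht. apply (@ex_derive_continuous R_AbsRing R_NormedModule). unfold gf, Rpower. auto_derive. lra. }
  specialize (H Hd Hc).
  rewrite RInt_lin2 in H by (apply gf_exRInt; lra).
  lra.
Qed.

Lemma pow_rescale a c y : 0 < c -> 0 < y ->
  a / c * Rpower (y / c) (a - 1) = Rpower c (- a) * (a * Rpower y (a - 1)).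
Proof.
  intros Hc Hy. unfold Rpower. rewrite ln_div by lra.
  replace (a / c) with (a * exp (- ln c)) by (rewrite exp_Ropp, exp_ln by lra; field; lra).
  replace (a * exp (- ln c) * exp ((a - 1) * (ln y - ln c))) with (a * exp ((a - 1) * ln y + - a * ln c))
    by (rewrite Rmult_assoc, <- exp_plus; f_equal; f_equal; ring).
  rewrite exp_plus. ring.
Qed.

Lemma J_upper a c : 0 < a -> 0 < c -> J a c <= exp (- c) + Rpower c (- a) * Gamma (1 + a).
Proof.
  intros Ha Hc. apply Rle_plus_epsilon. intros eta Heta.
  assert (Hia : 0 < / a) by (apply Rinv_0_lt_compat; lra).
  set (p := Rmin (1/2) (Rpower eta (/ a))).
  assert (Hp0 : 0 < p) by (unfold p; apply Rmin_glb_lt; [lra|apply Rpower_pos]).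
  assert (Hp1 : p <= 1/2) by apply Rmin_l.
  assert (Hp2 : p <= Rpower eta (/ a)) by apply Rmin_r.
  set (al := Rpower p a).
  assert (Hal0 : 0 < al) by apply Rpower_pos.
  assert (Hal1 : al < 1) by (apply Rpower_lt1; lra).
  assert (Haleta : al <= eta).
  { apply Rle_trans with (Rpower (Rpower eta (/ a)) a).
    - apply Rpower_le_base; lra.
    - rewrite Rpower_mult, Rinv_l, Rpower_1 by lra. lra. }
  set (ep := c * p).
  assert (Hep : 0 < ep < c) by (unfold ep; split; nra).
  set (fE := fun v => exp (- c * rpow v (/ a))).
  assert (HfEc : forall v, continuous fE v).
  { intros v. unfold fE. apply (cR_comp (fun v => - c * rpow v (/ a)) exp).
    - apply cR_mult; [apply cR_const|apply rpow_cont; lra].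
    - apply cR_exp. }
  assert (HfEex : forall x y, ex_RInt fE x y) by (intros; apply (@ex_RInt_continuous R_CompleteNormedModule); intros; apply HfEc).
  unfold J. rewrite <- (RI_chasles (gJ a c) 0 al 1) by (apply gJ_exRInt; lra).
  assert (H1 : RI (gJ a c) 0 al <= al).
  { apply Rle_trans with (RI (fun _ => 1) 0 al).
    - apply RI_le; [lra|apply gJ_exRInt; lra|apply ex_RInt_const|].
      intros t Ht. apply gJ_bounds; lra.
    - rewrite RI_const. lra. }
  assert (H2 : RI (gJ a c) al 1 <= RI fE al 1).
  { apply RI_le; [lra|apply gJ_exRInt; lra|apply HfEex|].
    intros v Hv. unfold gJ, fE. rewrite (rpow_pos v) by lra.
    assert (Hu : Rpower v (/ a) < 1) by (apply Rpower_lt1; lra).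
    pose proof (Rpower_pos v (/ a)).
    rewrite rpow_pos by lra. unfold Rpower at 1. apply exp_le_exp.
    pose proof (exp_ineq1_le (ln (1 - Rpower v (/ a)))). rewrite exp_ln in H0 by lra.
    nra. }
  assert (H3 : RI fE al 1 = Rpower c (- a) * (a * RI (gf a) ep c)).
  { set (g := fun y => Rpower (y / c) a). set (dg := fun y => a / c * Rpower (y / c) (a - 1)).
    assert (Hcomp := is_RInt_comp fE g dg ep c).
    assert (Hg1 : g ep = al) by (unfold g, ep, al; f_equal; field; lra).
    assert (Hg2 : g c = 1) by (unfold g; replace (c / c) with 1 by (field; lra); apply Rpower_1_base).
    rewrite Hg1, Hg2 in Hcomp.
    assert (Hpos : forall x, Rmin ep c <= x <= Rmax ep c -> 0 < x).
    { intros x [Hx _]. rewrite Rmin_left in Hx by lra. lra. }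
    specialize (Hcomp (fun x _ => HfEc (g x))).
    assert (Hdg : forall x, Rmin ep c <= x <= Rmax ep c -> is_derive g x (dg x) /\ continuous dg x).
    { intros x Hx. specialize (Hpos x Hx). split.
      - unfold g, dg, Rpower. auto_derive; [apply Rdiv_lt_0_compat; lra|].
        replace ((a - 1) * ln (x / c)) with (a * ln (x / c) + - ln (x / c)) by ring.
        rewrite exp_plus, (exp_Ropp (ln (x / c))), exp_ln by (apply Rdiv_lt_0_compat; lra). change (x * / c) with (x / c). assert (x / c <> 0) by (apply Rgt_not_eq, Rdiv_lt_0_compat; lra). field; auto; lra.
      - apply (@ex_derive_continuous R_AbsRing R_NormedModule). unfold dg, Rpower. auto_derive.
        apply Rdiv_lt_0_compat; lra. }
    specialize (Hcomp Hdg).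
    apply is_RInt_unique in Hcomp. change (RInt fE al 1) with (RI fE al 1) in Hcomp.
    rewrite <- Hcomp. fold (RI (fun y => scal (dg y) (fE (g y))) ep c).
    rewrite <- RI_scal by (apply gf_exRInt; lra).
    rewrite <- RI_scal by (apply ex_RInt_scalR; apply gf_exRInt; lra).
    apply RI_ext; [lra|]. intros y Hy.
    unfold fE, g, dg, gf. change (scal ?u ?v) with (u * v).
    rewrite rpow_pos by apply Rpower_pos. rewrite Rpower_mult, Rinv_r, Rpower_1 by (try apply Rdiv_lt_0_compat; lra).
    replace (- c * (y / c)) with (- y) by (field; lra).
    rewrite pow_rescale by lra. ring. }
  pose proof (gf_byparts0 a ep c ltac:(lra) ltac:(lra)) as BP.
  pose proof (RI_le_Gamma (a + 1) ep c ltac:(lra) ltac:(lra)) as G.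
  replace (a + 1) with (1 + a) in BP, G by ring.
  assert (Hca : Rpower c (- a) * Rpower c a = 1).
  { rewrite <- Rpower_plus. replace (- a + a) with 0 by ring. apply Rpower_O; lra. }
  pose proof (Rpower_pos c (- a)). pose proof (Rpower_pos ep a). pose proof (exp_pos (- ep)).
  assert (0 <= Rpower ep a * exp (- ep)) by (apply Rmult_le_pos; lra).
  assert (a * RI (gf a) ep c <= Gamma (1 + a) + Rpower c a * exp (- c)) by lra.
  assert (Hfin : Rpower c (- a) * (a * RI (gf a) ep c) <= Rpower c (- a) * (Gamma (1 + a) + Rpower c a * exp (- c)))
    by (apply Rmult_le_compat_l; lra).
  replace (Rpower c (- a) * (Gamma (1 + a) + Rpower c a * exp (- c))) with
    (Rpower c (- a) * Gamma (1 + a) + (Rpower c (- a) * Rpower c a) * exp (- c)) in Hfin by ring.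
  rewrite Hca in Hfin.
  lra.
Qed.

Lemma exists_nat_ge X : exists n : nat, X <= INR n.
Proof.
  destruct (Rle_or_lt X 0) as [H|H]; [exists 0%nat; simpl; lra|].
  exists (Z.to_nat (up X)). destruct (archimed X) as [H1 _]. rewrite INR_IZR_INZ.
  rewrite Z2Nat.id; [lra|]. apply le_IZR. lra.
Qed.

Lemma pr_pos y n : 0 < y -> 0 < pr y n.
Proof. intros Hy. induction n; simpl; [lra|]. pose proof (pos_INR n). nra. Qed.

Lemma J_iter a b n : 0 < a -> 0 < b ->
  J a b * pr (b + 1) n = J a (b + INR n) * pr (a + b + 1) n.
Proof.
  intros Ha Hb. induction n.
  - simpl. rewrite Rplus_0_r. ring.
  - simpl pr. rewrite S_INR.
    pose proof (pos_INR n).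
    pose proof (J_rec a (b + INR n) Ha ltac:(lra)) as JR.
    replace (b + (INR n + 1)) with (b + INR n + 1) by ring.
    replace (J a b * (pr (b + 1) n * (b + 1 + INR n))) with ((J a b * pr (b + 1) n) * (b + 1 + INR n)) by ring.
    rewrite IHn.
    replace (J a (b + INR n + 1) * (pr (a + b + 1) n * (a + b + 1 + INR n)))
      with (((a + (b + INR n) + 1) * J a (b + INR n + 1)) * pr (a + b + 1) n) by ring.
    rewrite JR. ring.
Qed.

Lemma Rpower_exp x a : Rpower (exp x) a = exp (a * x).
Proof. unfold Rpower. rewrite ln_exp. reflexivity. Qed.

Lemma J_beta b l : 0 < b < 1 -> (1 <= l)%nat ->
  J (INR l * b) b <= Gamma (1 + INR l * b) * Gamma (1 + b) / Gamma (1 + INR l * b + b).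
Proof.
  intros Hb Hl. set (a := INR l * b).
  assert (Ha : 0 < a) by (unfold a; assert (1 <= INR l) by (apply (le_INR 1); lia); nra).
  assert (HGa : 0 < Gamma (1 + a)) by (apply Gamma_pos; lra).
  assert (HGb : 0 < Gamma (1 + b)) by (apply Gamma_pos; lra).
  assert (HGab : 0 < Gamma (1 + a + b)) by (apply Gamma_pos; lra).
  set (K := Gamma (1 + b) / Gamma (1 + a + b)).
  assert (HK : 0 < K) by (unfold K; apply Rdiv_lt_0_compat; lra).
  replace (Gamma (1 + a) * Gamma (1 + b) / Gamma (1 + a + b)) with (Gamma (1 + a) * K) by (unfold K; field; lra).
  assert (Hn : forall n, J a b <= (exp (- (b + INR n)) * Rpower (b + INR n + 1 + a) a
                  + Rpower (b + INR n) (- a) * Rpower (b + INR n + 1 + a) a * Gamma (1 + a)) * K).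
  { intros n. pose proof (pos_INR n) as Hn0.
    pose proof (J_iter a b n Ha ltac:(lra)) as JI.
    assert (Hp1 : 1 <= b + 1) by lra. assert (Hp2 : 1 <= a + b + 1) by lra.
    pose proof (Gamma_pr (b + 1) n Hp1) as G1. pose proof (Gamma_pr (a + b + 1) n Hp2) as G2.
    pose proof (pr_pos (b + 1) n ltac:(lra)). pose proof (pr_pos (a + b + 1) n ltac:(lra)).
    pose proof (Gamma_pos (b + 1) Hp1). pose proof (Gamma_pos (a + b + 1) Hp2).
    set (y := b + 1 + INR n).
    assert (Hy : 1 <= y) by (unfold y; lra).
    pose proof (Gamma_ratio y b l Hy Hb l (le_n l)) as GR. fold a in GR.
    replace (y + a) with (a + b + 1 + INR n) in GR by (unfold y; ring).
    replace y with (b + 1 + INR n) in GR by reflexivity.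
    pose proof (J_upper a (b + INR n) Ha ltac:(lra)) as JU.
    assert (HJ0 : 0 <= J a (b + INR n)).
    { unfold J, RI. apply RInt_ge_0; [lra|apply gJ_exRInt; lra|]. intros; apply gJ_bounds; lra. }
    assert (E1 : J a b = J a (b + INR n) * (Gamma (a + b + 1 + INR n) / Gamma (a + b + 1)) / (Gamma (b + 1 + INR n) / Gamma (b + 1))).
    { rewrite G1, G2. field_simplify_eq; [|repeat split; lra].
      replace (J a b * Gamma (a + b + 1) * Gamma (b + 1) * pr (b + 1) n) with ((J a b * pr (b + 1) n) * Gamma (a + b + 1) * Gamma (b + 1)) by ring.
      rewrite JI. ring. }
    pose proof (Gamma_pos (b + 1 + INR n) ltac:(lra)).
    assert (E2 : J a b <= J a (b + INR n) * Rpower (b + 1 + INR n + a) a * K).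
    { rewrite E1. unfold K. replace (1 + b) with (b + 1) by ring. replace (1 + a + b) with (a + b + 1) by ring.
      apply Rle_trans with (J a (b + INR n) * (Rpower (b + 1 + INR n + a) a * Gamma (b + 1 + INR n) / Gamma (a + b + 1)) / (Gamma (b + 1 + INR n) / Gamma (b + 1))).
      - apply Rmult_le_compat_r; [left; apply Rinv_0_lt_compat, Rdiv_lt_0_compat; lra|].
        apply Rmult_le_compat_l; [lra|]. apply Rmult_le_compat_r; [left; apply Rinv_0_lt_compat; lra|].
        replace (b + 1 + INR n + a) with (a + b + 1 + INR n) by ring. exact GR.
      - right. field. lra. }
    replace (b + 1 + INR n + a) with (b + INR n + 1 + a) in E2 by ring.
    pose proof (Rpower_pos (b + INR n + 1 + a) a).
    eapply Rle_trans; [exact E2|]. apply Rmult_le_compat_r; [lra|].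
    replace ((exp (- (b + INR n)) * Rpower (b + INR n + 1 + a) a + Rpower (b + INR n) (- a) * Rpower (b + INR n + 1 + a) a * Gamma (1 + a)))
      with ((exp (- (b + INR n)) + Rpower (b + INR n) (- a) * Gamma (1 + a)) * Rpower (b + INR n + 1 + a) a) by ring.
    apply Rmult_le_compat_r; lra. }
  apply Rle_plus_epsilon. intros eta Heta.
  set (eta' := eta / (K * (1 + Gamma (1 + a)))).
  assert (Heta' : 0 < eta') by (unfold eta'; apply Rdiv_lt_0_compat; [lra|]; apply Rmult_lt_0_compat; lra).
  destruct (polyexp_bound a ltac:(lra)) as [C [HC Hb']].
  assert (Hl1 : 0 < ln (1 + eta')) by (rewrite <- ln_1; apply ln_increasing; lra).
  destruct (exists_nat_ge (a * (1 + a) / ln (1 + eta') + 2 * C * exp (1 + a) / eta')) as [n Hnn].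
  specialize (Hn n). set (c := b + INR n) in *. set (d := c + 1 + a) in *.
  pose proof (pos_INR n).
  assert (Hc1 : a * (1 + a) / ln (1 + eta') <= c).
  { assert (0 <= 2 * C * exp (1 + a) / eta').
    { apply Rdiv_le_0_compat; [|lra]. pose proof (exp_pos (1 + a)). nra. }
    assert (0 <= a * (1 + a) / ln (1 + eta')) by (apply Rdiv_le_0_compat; nra).
    unfold c. lra. }
  assert (Hc2 : 2 * C * exp (1 + a) / eta' <= d).
  { assert (0 <= a * (1 + a) / ln (1 + eta')) by (apply Rdiv_le_0_compat; nra).
    unfold d, c. lra. }
  assert (Hc0 : 0 < c) by (unfold c; lra).
  assert (Hd0 : 0 < d) by (unfold d; lra).
  assert (T1 : exp (- c) * Rpower d a <= eta').
  { assert (E : exp (- c) = exp (1 + a) * exp (- d)) by (rewrite <- exp_plus; f_equal; unfold d; ring).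
    rewrite E. pose proof (Hb' d Hd0) as Hbd.
    assert (exp (- d / 2) <= 2 / d).
    { pose proof (exp_ineq1_le (d / 2)). pose proof (exp_pos (d / 2)).
      replace (- d / 2) with (- (d / 2)) by field. rewrite exp_Ropp.
      apply Rle_trans with (/ (1 + d / 2)); [apply Rinv_le_contravar; lra|].
      apply Rle_trans with (/ (d / 2)); [apply Rinv_le_contravar; lra|]. right; field. lra. }
    pose proof (exp_pos (1 + a)).
    apply Rle_trans with (exp (1 + a) * (C * (2 / d))).
    - replace (exp (1 + a) * exp (- d) * Rpower d a) with (exp (1 + a) * (Rpower d a * exp (- d))) by ring.
      apply Rmult_le_compat_l; [lra|]. eapply Rle_trans; [exact Hbd|]. apply Rmult_le_compat_l; lra.
    - apply Rmult_le_reg_r with d; [lra|].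
      replace (exp (1 + a) * (C * (2 / d)) * d) with (2 * C * exp (1 + a)) by (field; lra).
      apply Rmult_le_compat_l with (r := eta') in Hc2; [|lra].
      replace (eta' * (2 * C * exp (1 + a) / eta')) with (2 * C * exp (1 + a)) in Hc2 by (field; lra).
      lra. }
  assert (T2 : Rpower c (- a) * Rpower d a <= 1 + eta').
  { assert (E : Rpower c (- a) * Rpower d a = Rpower (d / c) a).
    { unfold Rdiv. rewrite <- Rpower_mult_distr by (try apply Rinv_0_lt_compat; lra).
      rewrite Rmult_comm. f_equal. unfold Rpower. rewrite ln_Rinv by lra. f_equal. ring. }
    rewrite E.
    assert (Hdc : d / c <= exp ((1 + a) / c)).
    { pose proof (exp_ineq1_le ((1 + a) / c)). replace (d / c) with (1 + (1 + a) / c) by (unfold d; field; lra). lra. }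
    apply Rle_trans with (Rpower (exp ((1 + a) / c)) a).
    - apply Rpower_le_base; [lra|]. split; [apply Rdiv_lt_0_compat; lra|exact Hdc].
    - rewrite Rpower_exp. rewrite <- (exp_ln (1 + eta')) by lra. apply exp_le_exp.
      apply Rmult_le_reg_r with c; [lra|].
      replace (a * ((1 + a) / c) * c) with (a * (1 + a)) by (field; lra).
      apply Rmult_le_compat_l with (r := ln (1 + eta')) in Hc1; [|lra].
      replace (ln (1 + eta') * (a * (1 + a) / ln (1 + eta'))) with (a * (1 + a)) in Hc1 by (field; lra).
      lra. }
  eapply Rle_trans; [exact Hn|].
  apply Rle_trans with ((eta' + (1 + eta') * Gamma (1 + a)) * K).
  - apply Rmult_le_compat_r; [lra|]. apply Rplus_le_compat; [exact T1|].
    apply Rmult_le_compat_r; lra.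
  - right. unfold eta'. field. split; lra.
Qed.

Lemma rpow_mono x y p : 0 < p -> x <= y -> rpow x p <= rpow y p.
Proof.
  intros Hp Hxy. destruct (Rle_or_lt x 0) as [Hx|Hx].
  - rewrite rpow_le0 by lra. apply rpow_nonneg.
  - rewrite !rpow_pos by lra. apply Rpower_le_base; lra.
Qed.

Lemma rpow_Rpower_inv w a : 0 < a -> 0 < w -> Rpower (Rpower w a) (/ a) = w.
Proof. intros Ha Hw. rewrite Rpower_mult, Rinv_r, Rpower_1 by lra. reflexivity. Qed.

Section SI.
Variables (a b : R) (k : nat).
Hypotheses (Ha : 0 < a) (Hb : 0 < b < 1) (Hk : (1 <= k)%nat).

Let q (j : nat) : R := rpow (INR k - INR j) b.
Let p (j : nat) : R := rpow (INR j) a.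
Let psi (w : R) : R := rpow (INR k - rpow w (/ a)) b.

Lemma psi_cont w : continuous psi w.
Proof.
  unfold psi. apply (cR_comp (fun w => INR k - rpow w (/ a)) (fun z => rpow z b)).
  - apply cR_minus; [apply cR_const|apply rpow_cont; apply Rinv_0_lt_compat; lra].
  - apply rpow_cont; lra.
Qed.

Lemma psi_ex x y : ex_RInt psi x y.
Proof. apply (@ex_RInt_continuous R_CompleteNormedModule). intros; apply psi_cont. Qed.

Lemma psi_int : RI psi 0 (rpow (INR k) a) = rpow (INR k) (a + b) * J a b.
Proof.
  assert (Hk0 : 0 < INR k) by (apply lt_0_INR; lia).
  set (K := rpow (INR k) a).
  assert (HK : K = Rpower (INR k) a) by (apply rpow_pos; lra).
  assert (HK0 : 0 < K) by (rewrite HK; apply Rpower_pos).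
  pose proof (RInt_comp_lin psi K 0 0 1 (psi_ex _ _)) as L.
  replace (K * 0 + 0) with 0 in L by ring. replace (K * 1 + 0) with K in L by ring.
  change (RInt psi 0 K) with (RI psi 0 K) in L. rewrite <- L.
  unfold J. rewrite rpow_pos by lra. rewrite <- RI_scal by (apply gJ_exRInt; lra).
  change (RInt (fun y => scal K (psi (K * y + 0))) 0 1) with (RI (fun y => K * psi (K * y + 0)) 0 1).
  apply RI_ext; [lra|]. intros y Hy. unfold psi, gJ.
  rewrite Rplus_0_r. rewrite (rpow_pos (K * y)) by nra. rewrite (rpow_pos y) by lra.
  rewrite <- Rpower_mult_distr by lra. rewrite HK. rewrite rpow_Rpower_inv by lra.
  assert (Hu : Rpower y (/ a) < 1) by (apply Rpower_lt1; [apply Rinv_0_lt_compat|]; lra).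
  replace (INR k - INR k * Rpower y (/ a)) with (INR k * (1 - Rpower y (/ a))) by ring.
  rewrite !rpow_pos by nra. rewrite <- Rpower_mult_distr by lra. rewrite Rpower_plus. ring.
Qed.

Lemma sum_int_aux n : (n < k)%nat ->
  sum_f_R0 (fun j => (q j - q (S j)) * p j) n + p n * q (S n) <= RI psi 0 (p n).
Proof.
  induction n; intros Hn.
  - simpl. unfold p. simpl. rewrite rpow_le0 by lra. unfold RI. rewrite RInt_point. unfold zero; simpl. lra.
  - rewrite tech5. specialize (IHn ltac:(lia)).
    assert (Hpn : 0 <= p n) by apply rpow_nonneg.
    assert (Hmono : p n <= p (S n)) by (unfold p; apply rpow_mono; [lra|apply le_INR; lia]).
    rewrite <- (RI_chasles psi 0 (p n) (p (S n))) by apply psi_ex.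
    assert ((p (S n) - p n) * q (S n) <= RI psi (p n) (p (S n))).
    { apply Rle_trans with (RI (fun _ => q (S n)) (p n) (p (S n))).
      - rewrite RI_const. lra.
      - apply RI_le; [lra|apply ex_RInt_const|apply psi_ex|].
        intros w Hw. unfold q, psi. apply rpow_mono; [lra|].
        assert (rpow w (/ a) <= INR (S n)); [|lra].
        rewrite rpow_pos by lra.
        assert (HSn : 0 < INR (S n)) by (apply lt_0_INR; lia).
        rewrite <- (rpow_Rpower_inv (INR (S n)) a) by lra.
        apply Rpower_le_base; [left; apply Rinv_0_lt_compat; lra|].
        unfold p in Hw. rewrite (rpow_pos (INR (S n))) in Hw by lra. pose proof (rpow_nonneg (INR n) a). lra. }
    lra.
Qed.

Lemma sum_int :
  sum_f_R0 (fun j => (q j - q (S j)) * p j) (k - 1) <= rpow (INR k) (a + b) * J a b.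
Proof.
  pose proof (sum_int_aux (k - 1) ltac:(lia)) as H.
  replace (S (k - 1)) with k in H by lia.
  assert (Hqk : q k = 0) by (unfold q; apply rpow_le0; lra).
  rewrite Hqk, Rmult_0_r, Rplus_0_r in H.
  rewrite <- psi_int. eapply Rle_trans; [exact H|].
  rewrite <- (RI_chasles psi 0 (p (k - 1)) (rpow (INR k) a)) by apply psi_ex.
  assert (0 <= RI psi (p (k - 1)) (rpow (INR k) a)); [|lra].
  unfold RI. apply RInt_ge_0; [|apply psi_ex|intros; apply rpow_nonneg].
  unfold p. apply rpow_mono; [lra|apply le_INR; lia].
Qed.

Lemma sum_tele : sum_f_R0 (fun j => q j - q (S j)) (k - 1) = rpow (INR k) b.
Proof.
  assert (H : forall n, sum_f_R0 (fun j => q j - q (S j)) n = q 0 - q (S n)).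
  { induction n; simpl; [reflexivity|]. rewrite IHn. ring. }
  rewrite H. replace (S (k - 1)) with k by lia. unfold q. simpl. rewrite Rminus_0_r, Rminus_diag.
  rewrite (rpow_le0 0) by lra. ring.
Qed.

End SI.

Lemma rpow_pow x p n : (1 <= n)%nat -> (rpow x p) ^ n = rpow x (INR n * p).
Proof.
  intros Hn. destruct (Rle_or_lt x 0) as [Hx|Hx].
  - rewrite !rpow_le0 by lra. destruct n; [lia|]. simpl. ring.
  - rewrite !rpow_pos by lra. rewrite <- Rpower_pow by apply Rpower_pos.
    rewrite Rpower_mult. f_equal. ring.
Qed.

Lemma rho_bound' b k j : 0 < b < 1 -> (j <= k - 1)%nat -> (1 <= k)%nat ->
  rho b (k - j) <= (rpow (INR k - INR j) b - rpow (INR k - INR (S j)) b) / Gamma (1 + b).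
Proof.
  intros Hb Hj Hk. pose proof (rho_bound b (k - j) Hb ltac:(lia)) as H.
  rewrite minus_INR in H by lia. replace (k - j - 1)%nat with (k - S j)%nat in H by lia.
  rewrite minus_INR in H by lia. exact H.
Qed.

Lemma termwise b k l : 0 < b < 1 -> (1 <= k)%nat ->
  sum_f_R0 (fun j => rho b (k - j) * (rpow (INR j) b) ^ l / Gamma (1 + INR l * b)) (k - 1)
  <= (rpow (INR k) b) ^ (S l) / Gamma (1 + INR (S l) * b).
Proof.
  intros Hb Hk. set (G := Gamma (1 + b)).
  assert (HG : 0 < G) by (apply Gamma_pos; lra).
  destruct l as [|l'].
  - simpl INR. replace (1 + 0 * b) with 1 by ring. rewrite Gamma_1. replace (1 + 1 * b) with (1 + b) by ring.
    fold G.
    apply Rle_trans with (sum_f_R0 (fun j => (rpow (INR k - INR j) b - rpow (INR k - INR (S j)) b) / G) (k - 1)).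
    + apply sum_Rle. intros j Hj. simpl pow. replace (rho b (k - j) * 1 / 1) with (rho b (k - j)) by field.
      apply rho_bound'; auto.
    + right. replace (sum_f_R0 (fun j => (rpow (INR k - INR j) b - rpow (INR k - INR (S j)) b) / G) (k - 1))
        with (/ G * sum_f_R0 (fun j => rpow (INR k - INR j) b - rpow (INR k - INR (S j)) b) (k - 1)).
      * rewrite sum_tele by auto. simpl pow. field. lra.
      * rewrite scal_sum. apply sum_eq. intros; unfold Rdiv; ring.
  - set (l := S l'). set (a := INR l * b).
    assert (Hl : (1 <= l)%nat) by (unfold l; lia).
    assert (Ha : 0 < a) by (unfold a; assert (1 <= INR l) by (apply (le_INR 1); lia); nra).
    assert (HGa : 0 < Gamma (1 + a)) by (apply Gamma_pos; lra).
    assert (HGab : 0 < Gamma (1 + a + b)) by (apply Gamma_pos; lra).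
    replace (INR (S l) * b) with (a + b) by (unfold a; rewrite S_INR; ring).
    rewrite rpow_pow by lia. replace (INR (S l) * b) with (a + b) by (unfold a; rewrite S_INR; ring).
    apply Rle_trans with (sum_f_R0 (fun j => (rpow (INR k - INR j) b - rpow (INR k - INR (S j)) b) * rpow (INR j) a * / (G * Gamma (1 + a))) (k - 1)).
    + apply sum_Rle. intros j Hj. rewrite rpow_pow by lia. fold a.
      pose proof (rho_bound' b k j Hb Hj Hk) as RB. fold G in RB.
      pose proof (rpow_nonneg (INR j) a).
      replace ((rpow (INR k - INR j) b - rpow (INR k - INR (S j)) b) * rpow (INR j) a * / (G * Gamma (1 + a)))
        with ((rpow (INR k - INR j) b - rpow (INR k - INR (S j)) b) / G * rpow (INR j) a / Gamma (1 + a)) by (field; lra).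
      unfold Rdiv. apply Rmult_le_compat_r; [left; apply Rinv_0_lt_compat; lra|].
      apply Rmult_le_compat_r; lra.
    + rewrite <- scal_sum. pose proof (sum_int a b k Ha Hb Hk) as SI.
      pose proof (J_beta b l Hb Hl) as JB. fold a in JB. fold G in JB.
      replace (1 + a + b) with (1 + INR l * b + b) in HGab |- * by (unfold a; ring).
      fold a.
      pose proof (rpow_nonneg (INR k) (a + b)).
      assert (0 < / (G * Gamma (1 + a))) by (apply Rinv_0_lt_compat, Rmult_lt_0_compat; lra).
      apply Rle_trans with (/ (G * Gamma (1 + a)) * (rpow (INR k) (a + b) * J a b)).
      * apply Rmult_le_compat_l; [lra|]. exact SI.
      * apply Rle_trans with (/ (G * Gamma (1 + a)) * (rpow (INR k) (a + b) * (Gamma (1 + a) * G / Gamma (1 + a + b)))).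
        -- apply Rmult_le_compat_l; [lra|]. apply Rmult_le_compat_l; [lra|]. exact JB.
        -- right. replace (1 + (a + b)) with (1 + a + b) by ring. field. lra.
Qed.

Lemma exsR_scal c (a : nat -> R) : ex_series a -> ex_series (fun n => c * a n).
Proof. intros H. exact (@ex_series_scal_l R_AbsRing R_NormedModule c a H). Qed.
Lemma exsR_plus (a b : nat -> R) : ex_series a -> ex_series b -> ex_series (fun n => a n + b n).
Proof. intros H1 H2. exact (@ex_series_plus R_AbsRing R_NormedModule a b H1 H2). Qed.
Lemma exsR_ext (a b : nat -> R) : (forall n, a n = b n) -> ex_series a -> ex_series b.
Proof. intros H1 H2. exact (@ex_series_ext R_AbsRing R_NormedModule a b H1 H2). Qed.

Lemma ex_series_ratio (u : nat -> R) L : (forall n, 0 <= u n) ->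
  (forall n, (L <= n)%nat -> u (S n) <= u n / 2) -> ex_series u.
Proof.
  intros Hpos Hr.
  assert (Hb : forall n, u (L + n)%nat <= u L * (/ 2) ^ n).
  { induction n.
    - rewrite Nat.add_0_r. simpl. lra.
    - replace (L + S n)%nat with (S (L + n)) by lia.
      eapply Rle_trans; [apply Hr; lia|]. simpl. lra. }
  apply (proj2 (@ex_series_incr_n R_AbsRing R_NormedModule u L)).
  apply (@ex_series_le R_AbsRing R_CompleteNormedModule _ (fun n => u L * (/ 2) ^ n)).
  - intros n. unfold norm; simpl. rewrite Rabs_pos_eq by apply Hpos. apply Hb.
  - apply exsR_scal. apply ex_series_geom. rewrite Rabs_pos_eq; lra.
Qed.

Lemma ml_ex b z : 0 < b < 1 -> 0 <= z -> ex_series (fun l => z ^ l / Gamma (1 + INR l * b)).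
Proof.
  intros Hb Hz.
  assert (HG : forall l, 0 < Gamma (1 + INR l * b)) by (intros; apply Gamma_pos; pose proof (pos_INR l); nra).
  destruct (exists_nat_ge (Rpower (4 * z + 1) (/ b) / b)) as [L HL].
  apply (ex_series_ratio _ L).
  - intros n. apply Rdiv_le_0_compat; [apply pow_le; lra|apply HG].
  - intros n Hn.
    set (x := 1 + INR n * b).
    assert (Hx : 1 <= x) by (unfold x; pose proof (pos_INR n); nra).
    assert (Hxb : 1 + INR (S n) * b = x + b) by (unfold x; rewrite S_INR; ring).
    rewrite Hxb.
    pose proof (Wendel_low x b Hx ltac:(lra)) as W.
    pose proof (HG n) as G0. fold x in G0.
    assert (G1 : 0 < Gamma (x + b)) by (apply Gamma_pos; lra).
    assert (Hxb2 : Rpower (x + b) b >= 4 * z + 1).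
    { assert (Rpower (4 * z + 1) (/ b) <= x + b).
      { apply Rmult_le_compat_r with (r := b) in HL; [|lra].
        replace (Rpower (4 * z + 1) (/ b) / b * b) with (Rpower (4 * z + 1) (/ b)) in HL by (field; lra).
        apply le_INR in Hn. unfold x. nra. }
      apply Rle_ge. apply Rle_trans with (Rpower (Rpower (4 * z + 1) (/ b)) b).
      - rewrite Rpower_mult, Rinv_l, Rpower_1 by lra. lra.
      - apply Rpower_le_base; [lra|]. split; [apply Rpower_pos|auto]. }
    assert (Hsplit : Rpower (x + b) (1 - b) * Rpower (x + b) b = x + b).
    { rewrite <- Rpower_plus. replace (1 - b + b) with 1 by ring. apply Rpower_1. lra. }
    pose proof (Rpower_pos (x + b) b). pose proof (Rpower_pos (x + b) (1 - b)).
    assert (Key : 2 * z * Gamma x <= Gamma (x + b)).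
    { apply Rmult_le_compat_l with (r := Rpower (x + b) b) in W; [|lra].
      replace (Rpower (x + b) b * (Rpower (x + b) (1 - b) * Gamma (x + b))) with ((Rpower (x + b) (1 - b) * Rpower (x + b) b) * Gamma (x + b)) in W
        by ring.
      rewrite Hsplit in W.
      assert (Rpower (x + b) b * (x * Gamma x) >= (4 * z + 1) * (x * Gamma x)).
      { apply Rle_ge. apply Rmult_le_compat_r; [nra|lra]. }
      assert ((x + b) * Gamma (x + b) <= 2 * x * Gamma (x + b)) by nra.
      nra. }
    change (z ^ S n) with (z * z ^ n).
    apply Rmult_le_reg_r with (Gamma (x + b)); [lra|].
    replace (z * z ^ n / Gamma (x + b) * Gamma (x + b)) with (z * z ^ n) by (field; lra).
    apply Rmult_le_reg_r with (2 * Gamma x); [lra|].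
    replace (z ^ n / Gamma x / 2 * Gamma (x + b) * (2 * Gamma x)) with (z ^ n * Gamma (x + b)) by (field; lra).
    pose proof (pow_le z n Hz). nra.
Qed.

Lemma sum_series (A : nat -> nat -> R) N : (forall j, ex_series (A j)) ->
  ex_series (fun l => sum_f_R0 (fun j => A j l) N) /\
  sum_f_R0 (fun j => Series (A j)) N = Series (fun l => sum_f_R0 (fun j => A j l) N).
Proof.
  intros H. induction N.
  - simpl. split; [apply (exsR_ext (A 0%nat)); auto|]. apply Series_ext. reflexivity.
  - destruct IHN as [E S]. simpl. split.
    + apply exsR_plus; auto.
    + rewrite S. rewrite Series_plus; auto.
Qed.

Theorem lemma2p3 (beta T mu : R) (nT : nat)
  (hb0 : 0 < beta) (hb1 : beta < 1) (hT : 0 < T) (hnT : (1 <= nT)%nat)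
  (hmu : 0 < mu) :
  let tau := T / INR nT in
  let t := fun k : nat => INR k * tau in
  let P := fun j : nat => rpow tau beta * rho beta j in
  forall k : nat, (1 <= k <= nT)%nat ->
    mu * sum_f_R0 (fun j => P (k - j)%nat * mittag_leffler beta (mu * rpow (t j) beta)) (k - 1)
    <= mittag_leffler beta (mu * rpow (t k) beta) - 1.
Proof.
  intros tau t P k Hk.
  assert (Hb : 0 < beta < 1) by lra.
  assert (HnT : 0 < INR nT) by (apply lt_0_INR; lia).
  assert (Htau : 0 < tau) by (unfold tau; apply Rdiv_lt_0_compat; lra).
  set (s := Rpower tau beta).
  assert (Hs : rpow tau beta = s) by (apply rpow_pos; lra).
  assert (Hs0 : 0 < s) by apply Rpower_pos.
  set (x := mu * s).
  assert (Hx : 0 < x) by (unfold x; nra).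
  set (y := fun j => rpow (INR j) beta).
  assert (Hy : forall j, 0 <= y j) by (intros; apply rpow_nonneg).
  assert (Hz : forall j, mu * rpow (t j) beta = x * y j).
  { intros j. unfold t, y, x. destruct j as [|j].
    - simpl. rewrite Rmult_0_l. rewrite rpow_le0 by lra. ring.
    - assert (0 < INR (S j)) by (apply lt_0_INR; lia).
      rewrite !rpow_pos by nra. rewrite <- Rpower_mult_distr by lra. fold s. ring. }
  set (Gl := fun l : nat => Gamma (1 + INR l * beta)).
  assert (HG : forall l, 0 < Gl l) by (intros; unfold Gl; apply Gamma_pos; pose proof (pos_INR l); nra).
  set (A := fun j l => x * rho beta (k - j) * ((x * y j) ^ l / Gl l)).
  assert (HA : forall j, ex_series (A j)).
  { intros j. unfold A. apply exsR_scal. apply ml_ex; auto. pose proof (Hy j). nra. }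
  assert (LHS : mu * sum_f_R0 (fun j => P (k - j)%nat * mittag_leffler beta (mu * rpow (t j) beta)) (k - 1)
               = sum_f_R0 (fun j => Series (A j)) (k - 1)).
  { rewrite scal_sum. apply sum_eq. intros j _. unfold A, P, mittag_leffler.
    rewrite Hs, Hz. rewrite Series_scal_l. unfold Gl. unfold x. ring. }
  rewrite LHS. destruct (sum_series A (k - 1) HA) as [Hex Heq]. rewrite Heq.
  unfold mittag_leffler. rewrite Hz.
  assert (Hexk : ex_series (fun l => (x * y k) ^ l / Gamma (1 + INR l * beta))).
  { apply ml_ex; auto. pose proof (Hy k). nra. }
  rewrite (Series_incr_1 _ Hexk).
  simpl INR at 1. replace (1 + 0 * beta) with 1 by ring. rewrite Gamma_1.
  replace ((x * y k) ^ 0 / 1 + Series (fun n => (x * y k) ^ S n / Gamma (1 + INR (S n) * beta)) - 1)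
    with (Series (fun n => (x * y k) ^ S n / Gamma (1 + INR (S n) * beta))) by (simpl; field).
  apply Series_le.
  - intros l. split.
    + apply cond_pos_sum. intros j. unfold A.
      pose proof (rho_nonneg beta (k - j) hb0). pose proof (Hy j). pose proof (HG l).
      apply Rmult_le_pos; [nra|]. apply Rdiv_le_0_compat; [apply pow_le; nra|lra].
    + pose proof (termwise beta k l Hb ltac:(lia)) as TW.
      replace (sum_f_R0 (fun j => A j l) (k - 1)) with
        (x ^ S l * sum_f_R0 (fun j => rho beta (k - j) * rpow (INR j) beta ^ l / Gamma (1 + INR l * beta)) (k - 1)).
      * replace ((x * y k) ^ S l / Gamma (1 + INR (S l) * beta)) with
          (x ^ S l * (rpow (INR k) beta ^ S l / Gamma (1 + INR (S l) * beta))).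
        -- apply Rmult_le_compat_l; [apply pow_le; lra|exact TW].
        -- unfold y. rewrite Rpow_mult_distr. unfold Rdiv. ring.
      * rewrite scal_sum. apply sum_eq. intros j _. unfold A, y, Gl.
        rewrite Rpow_mult_distr. simpl pow. field. apply Rgt_not_eq. apply Gamma_pos.
        pose proof (pos_INR l); nra.
  - apply (exsR_ext (fun n => (x * y k) ^ (1 + n) / Gamma (1 + INR (1 + n) * beta))); [reflexivity|].
    exact (proj1 (@ex_series_incr_n R_AbsRing R_NormedModule (fun l => (x * y k) ^ l / Gamma (1 + INR l * beta)) 1) Hexk).
Qed.
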